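(* Let $W$ be a finite set of possible worlds, let $G_1=(2^W,\gg_1)$ and $G_2$ be belief algebras on $W$, let $\bullet$ be an operator on belief algebras on $W$ satisfying (RA1)–(RA6), and let $G_*=(2^W,\gg_* )=\operatorname{Com}(G_1)\bullet\operatorname{Com}(G_2)$. Then $G_1\bullet G_2=\operatorname{Gen}((G_1\cap G_* )\cup G_2)$, and $$G_1\cap G_*=\{(U,V)\mid U\gg_1 V \text{ and } I_*(U)\gg_* I_*(V)\},$$ where $I_*$ denotes the support with respect to the backbone of $G_*$.
   Context: $W$ is a finite nonempty set; $R_W=\{(U,V)\mid U,V\subseteq W,\ U\cap V=\varnothing\}$. A belief algebra on $W$ is a pair $(2^W,\gg)$, $\gg$ a binary relation on $2^W$, such that for all $U,V,U_1,V_1,U_2,V_2\subseteq W$: (A0) $\gg\subseteq R_W$; (A1) $U\gg\varnothing$ iff $U\neq\varnothing$; (A2) $U\gg V$ implies not $V\gg U$; (A3) if $U_1\supseteq U$, $U\gg V$, $V\supseteq V_1$, $U_1\cap V_1=\varnothing$ then $U_1\gg V_1$; (A4) if $U=U_1\cup V_1=U_2\cup V_2$, $U_1\gg V_1$, $U_2\gg V_2$ then $U_1\cap U_2\gg V_1\cup V_2$. Belief algebras are identified with their relations as sets of pairs ($\subseteq,\cup,\cap$ accordingly). $\operatorname{Gen}(\Omega)$ for $\Omega\subseteq R_W$ is the smallest subset of $R_W$ that contains $\Omega$, contains $(U,\varnothing)$ for each nonempty $U$, and is closed under: $(U,V)$ in it, $U\subseteq U_1$, $V_1\subseteq V$, $U_1\cap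 V_1=\varnothing$ imply $(U_1,V_1)$ in it; $U_1\cup V_1=U_2\cup V_2$ with $(U_1,V_1),(U_2,V_2)$ in it imply $(U_1\cap U_2,V_1\cup V_2)$ in it. For a total preorder $\preceq$ on $W$ ($\omega\prec\omega'$ iff $\omega\preceq\omega'$ and not $\omega'\preceq\omega$), the relation $U\gg V$ iff $U\cap V=\varnothing$ and some $\omega_1\in U$ has $\omega_1\prec\omega_2$ for all $\omega_2\in V$ is a belief algebra; these are the complete belief algebras (CBAs). Every belief algebra has a unique backbone: nonempty pairwise disjoint $U_1,\dots,U_n$ with union $W$, $U_i\gg U_{i+1}$ for $i<n$, and any two disjoint nonempty subsets of a single $U_i$ incomparable under $\gg$. The support $I(V)$ of nonempty $V\subseteq W$ is $U_i$ for the least $i$ with $V\cap U_i\neq\varnothing$. $\operatorname{Com}(G)$ is the unique CBA containing $G$ with the same backbone as $G$ (the CBA of the total preorder ranking worlds by the index of their backbone block). $G\leq G'$ means $G,G'$ have the same backbone and $G\subseteq G'$. Postulates (for all belief algebras $G_1=(2^W,\gg_1)$, $G_2$, $G_1'$, $G_2'$): (RA1) $G_2\subseteq G_1\bullet G_2$. (RA2) $G_1\bullet G_2=\operatorname{Gen}(\Omega)$ for some $\Omega\subseteq G_1\cup G_2$. (RA3) If $G_1,G_2$ are CBAs then so is $G_1\bullet G_2$. (RA4) If $G_1,G_2$ are CBAs and $I_2(\{\omega\})=I_2(\{\omega'\})$ (support w.r.t. the backbone of $G_2$), then $(\{\omega\},\{\omega'\})\in G_1\bullet G_2$ iff $\{\omega\}\gg_1\{\omega'\}$.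 (RA5) If $G_1\leq G_1'$ and $G_2\leq G_2'$ then $G_1\bullet G_2\subseteq G_1'\bullet G_2'$. (RA6) If $\Omega\subseteq G_1\cup G_2$, $\operatorname{Gen}(\Omega)\subseteq\operatorname{Com}(G_1)\bullet\operatorname{Com}(G_2)$ and $G_1\bullet G_2\subseteq\operatorname{Gen}(\Omega)$, then $G_1\bullet G_2=\operatorname{Gen}(\Omega)$. *)

(* Defs.v *)
From Stdlib Require Import ClassicalEpsilon.
From mathcomp Require Import all_boot.
Set Implicit Arguments. Unset Strict Implicit. Unset Printing Implicit Defensive.

Section BeliefAlgebras.
Variable W : finType.

Definition brel := {set {set W} * {set W}}.

Definition RW : brel := [set p : {set W} * {set W} | [disjoint p.1 & p.2]].

Definition belief_algebra (G : brel) : Prop :=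
  G \subset RW /\
  (forall U : {set W}, (U, set0) \in G <-> U != set0) /\
  (forall U V : {set W}, (U, V) \in G -> (V, U) \notin G) /\
  (forall U V U1 V1 : {set W},
              U \subset U1 -> (U, V) \in G -> V1 \subset V ->
              [disjoint U1 & V1] -> (U1, V1) \in G) /\
  (forall U U1 V1 U2 V2 : {set W},
              U = U1 :|: V1 -> U = U2 :|: V2 ->
              (U1, V1) \in G -> (U2, V2) \in G ->
              (U1 :&: U2, V1 :|: V2) \in G).

Definition gen_closed (Om S : brel) : bool :=
  [&& S \subset RW, Om \subset S,
      [forall U : {set W}, (U != set0) ==> ((U, set0) \in S)],
      [forall p in S, forall q : {set W} * {set W},
          [&& p.1 \subset q.1, q.2 \subset p.2 & [disjoint q.1 & q.2]]
          ==> (q \in S)] &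
      [forall p in S, forall q in S,
          (p.1 :|: p.2 == q.1 :|: q.2) ==> ((p.1 :&: q.1, p.2 :|: q.2) \in S)]].

Definition Gen (Om : brel) : brel := \bigcap_(S : brel | gen_closed Om S) S.

Definition cba_of (le : rel W) : brel :=
  [set p : {set W} * {set W} | [disjoint p.1 & p.2] &&
           [exists w1 in p.1, forall w2 in p.2, le w1 w2 && ~~ le w2 w1]].

Definition total_preorder (le : rel W) : Prop := total le /\ transitive le.

Definition CBA (G : brel) : Prop :=
  exists le : rel W, total_preorder le /\ G = cba_of le.

Definition is_backbone (G : brel) (s : seq {set W}) : Prop :=
  (forall i, i < size s -> nth set0 s i != set0) /\
  (forall i j, i < size s -> j < size s -> i != j ->
     [disjoint nth set0 s i & nth set0 s j]) /\
  \bigcup_(B <- s) B = [set: W] /\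
  (forall i, i.+1 < size s -> (nth set0 s i, nth set0 s i.+1) \in G) /\
  (forall i, i < size s -> forall X Y : {set W},
     X \subset nth set0 s i -> Y \subset nth set0 s i ->
     X != set0 -> Y != set0 -> [disjoint X & Y] -> (X, Y) \notin G).

(* The (unique, for belief algebras) backbone of G, chosen by description. *)
Definition backbone (G : brel) : seq {set W} :=
  epsilon (inhabits [::]) (is_backbone G).

Definition bsupport (s : seq {set W}) (V : {set W}) : {set W} :=
  nth set0 s (find (fun B : {set W} => ~~ [disjoint B & V]) s).

Definition rank (s : seq {set W}) (w : W) : nat := find (fun B : {set W} => w \in B) s.

Definition Com (G : brel) : brel :=
  cba_of (fun w w' => rank (backbone G) w <= rank (backbone G) w').

Definition bleq (G G' : brel) : Prop := backbone G = backbone G' /\ G \subset G'.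

Section Postulates.
Variable op : brel -> brel -> brel.

Definition RA0 := forall G1 G2, belief_algebra G1 -> belief_algebra G2 ->
  belief_algebra (op G1 G2).
Definition RA1 := forall G1 G2, belief_algebra G1 -> belief_algebra G2 ->
  G2 \subset op G1 G2.
Definition RA2 := forall G1 G2, belief_algebra G1 -> belief_algebra G2 ->
  exists Om : brel, Om \subset G1 :|: G2 /\ op G1 G2 = Gen Om.
Definition RA3 := forall G1 G2, belief_algebra G1 -> belief_algebra G2 ->
  CBA G1 -> CBA G2 -> CBA (op G1 G2).
Definition RA4 := forall G1 G2, belief_algebra G1 -> belief_algebra G2 ->
  CBA G1 -> CBA G2 -> forall w w' : W,
  bsupport (backbone G2) [set w] = bsupport (backbone G2) [set w'] ->
  (([set w], [set w']) \in op G1 G2 <-> ([set w], [set w']) \in G1).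
Definition RA5 := forall G1 G2 G1' G2',
  belief_algebra G1 -> belief_algebra G2 ->
  belief_algebra G1' -> belief_algebra G2' ->
  bleq G1 G1' -> bleq G2 G2' -> op G1 G2 \subset op G1' G2'.
Definition RA6 := forall G1 G2, belief_algebra G1 -> belief_algebra G2 ->
  forall Om : brel, Om \subset G1 :|: G2 ->
  Gen Om \subset op (Com G1) (Com G2) -> op G1 G2 \subset Gen Om ->
  op G1 G2 = Gen Om.

Definition revision_operator : Prop :=
  RA0 /\ RA1 /\ RA2 /\ RA3 /\ RA4 /\ RA5 /\ RA6.
End Postulates.

End BeliefAlgebras.

(* Main.v *)
Require Import Defs.
From mathcomp Require Import all_boot zify.
From Stdlib Require Import ClassicalEpsilon.
Set Implicit Arguments. Unset Strict Implicit. Unset Printing Implicit Defensive.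

Lemma mem_bigcup_seq (W : finType) (s : seq {set W}) (x : W) :
  (x \in \bigcup_(B <- s) B) = has (fun B : {set W} => x \in B) s.
Proof. by elim: s => [|B s IH]; rewrite ?big_nil ?big_cons ?inE //= IH. Qed.

Lemma rank_lt (W : finType) (s : seq {set W}) (w : W) :
  \bigcup_(B <- s) B = [set: W] -> rank s w < size s.
Proof. by move=> Hc; rewrite /rank -has_find -mem_bigcup_seq Hc inE. Qed.

Lemma mem_rank (W : finType) (s : seq {set W}) (w : W) :
  \bigcup_(B <- s) B = [set: W] -> w \in nth set0 s (rank s w).
Proof.
move=> Hc; apply: (@nth_find _ set0 (fun B : {set W} => w \in B)).
by rewrite -mem_bigcup_seq Hc inE.
Qed.

Lemma nth_rankE (W : finType) (s : seq {set W}) i (w : W) :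
  (forall i j, i < size s -> j < size s -> i != j ->
     [disjoint nth set0 s i & nth set0 s j]) ->
  \bigcup_(B <- s) B = [set: W] -> i < size s ->
  (w \in nth set0 s i) = (rank s w == i).
Proof.
move=> Hd Hc Hi; apply/idP/eqP => [Hw|<-]; last exact: mem_rank.
apply/eqP; apply/negPn/negP => Hne.
have := Hd _ _ (rank_lt w Hc) Hi Hne.
by move/disjointFr/(_ (mem_rank w Hc)); rewrite Hw.
Qed.

Lemma nth_rank_set (W : finType) (s : seq {set W}) i :
  (forall i j, i < size s -> j < size s -> i != j ->
     [disjoint nth set0 s i & nth set0 s j]) ->
  \bigcup_(B <- s) B = [set: W] -> i < size s ->
  nth set0 s i = [set w | rank s w == i].
Proof. by move=> Hd Hc Hi; apply/setP=> w; rewrite inE nth_rankE. Qed.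

Lemma cba_mem (W : finType) (le : rel W) U V :
  ((U, V) \in cba_of le) =
  [disjoint U & V] && [exists w1 in U, forall w2 in V, le w1 w2 && ~~ le w2 w1].
Proof. by rewrite inE. Qed.

Lemma cba_belief (W : finType) (le : rel W) :
  total_preorder le -> belief_algebra (cba_of le).
Proof.
case=> Htot Htr.
have Hrefl : forall w, le w w by move=> w; case/orP: (Htot w w).
split; [|split; [|split; [|split]]].
- by apply/subsetP=> [[U V]]; rewrite cba_mem inE => /andP[].
- move=> U; rewrite cba_mem -setI_eq0 setI0 eqxx /=; split.
    case/exists_inP=> w Hw _; by apply/set0Pn; exists w.
  case/set0Pn=> w Hw; apply/exists_inP; exists w => //.
  by apply/forall_inP=> x; rewrite inE.
- move=> U V; rewrite !cba_mem => /andP[_ /exists_inP[w1 H1 /forall_inP H1']].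
  apply/negP=> /andP[_ /exists_inP[w2 H2 /forall_inP H2']].
  case/andP: (H1' _ H2) => _ /negP; apply.
  by case/andP: (H2' _ H1).
- move=> U V U1 V1 HU; rewrite !cba_mem => /andP[_ /exists_inP[w1 H1 /forall_inP H1']] HV ->.
  apply/exists_inP; exists w1; first exact: (subsetP HU).
  by apply/forall_inP=> x Hx; apply: H1'; apply: (subsetP HV).
- move=> U U1 V1 U2 V2 E1 E2; rewrite !cba_mem.
  case/andP=> D1 /exists_inP[w1 H1 /forall_inP H1'].
  case/andP=> D2 /exists_inP[w2 H2 /forall_inP H2'].
  apply/andP; split.
    rewrite -setI_eq0 setIUr; apply/eqP/setP=> x; rewrite !inE.
    apply/negP=> /orP[/andP[/andP[Hx _] Hy]|/andP[/andP[_ Hx] Hy]].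
      by rewrite (disjointFr D1 Hx) in Hy.
    by rewrite (disjointFr D2 Hx) in Hy.
  wlog Hle : U1 V1 U2 V2 w1 w2 E1 E2 D1 D2 H1 H2 H1' H2' / le w1 w2.
    move=> Hw; case/orP: (Htot w1 w2) => Hl; first exact: (Hw _ _ _ _ w1 w2).
    rewrite setIC setUC; exact: (Hw _ _ _ _ w2 w1).
  have Hw1U : w1 \in U by rewrite E1 inE H1.
  have Hw1U2 : w1 \in U2.
    move: Hw1U; rewrite E2 inE => /orP[//|Hv].
    by case/andP: (H2' _ Hv) => _ /negP; case.
  apply/exists_inP; exists w1; first by rewrite inE H1.
  apply/forall_inP=> x; rewrite inE => /orP[Hx|Hx]; first exact: H1'.
  case/andP: (H2' _ Hx) => Hl2 Hn2; rewrite (Htr _ _ _ Hle Hl2) /=.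
  by apply/negP=> Hxw; move/negP: Hn2; apply; apply: Htr Hxw Hle.
Qed.

Lemma Gen_sub (W : finType) (Om S : brel W) : gen_closed Om S -> Gen Om \subset S.
Proof. by move=> H; apply: bigcap_inf. Qed.

Lemma Gen_ext (W : finType) (Om : brel W) : Om \subset Gen Om.
Proof.
apply/subsetP=> p Hp; apply/bigcapP=> S /and5P[_ HS _ _ _].
exact: (subsetP HS).
Qed.

Lemma Gen_mono (W : finType) (Om Om' : brel W) : Om \subset Om' -> Gen Om \subset Gen Om'.
Proof.
move=> H; apply/subsetP=> p /bigcapP Hp; apply/bigcapP=> S /and5P[a b c d e].
by apply: Hp; rewrite /gen_closed a c d e (subset_trans H b).
Qed.

Lemma ba_closed (W : finType) (Om G : brel W) :
  belief_algebra G -> Om \subset G -> gen_closed Om G.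
Proof.
case=> A0 [A1 [A2 [A3 A4]]] HO; rewrite /gen_closed A0 HO /=.
apply/and3P; split.
- by apply/forallP=> U; apply/implyP=> HU; apply/A1.
- apply/forall_inP=> p Hp; apply/forallP=> q; apply/implyP=> /and3P[h1 h2 h3].
  case: p Hp h1 h2 => U V Hp h1 h2; case: q h1 h2 h3 => U1 V1 /= h1 h2 h3.
  exact: (A3 U V).
- apply/forall_inP=> p Hp; apply/forall_inP=> q Hq; apply/implyP=> /eqP E.
  case: p Hp E => U1 V1 Hp; case: q Hq => U2 V2 Hq /= E.
  exact: (A4 (U1 :|: V1)).
Qed.

Lemma ba_nonempty (W : finType) (G : brel W) (U V : {set W}) :
  belief_algebra G -> (U, V) \in G -> U != set0.
Proof.
case=> A0 [A1 [A2 [A3 A4]]] H; apply/negP=> /eqP E; subst U.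
have := A3 _ _ set0 set0 (sub0set _) H (sub0set _).
rewrite -setI_eq0 setI0 eqxx => /(_ isT) /A1; by rewrite eqxx.
Qed.

Lemma ba_disj (W : finType) (G : brel W) (U V : {set W}) :
  belief_algebra G -> (U, V) \in G -> [disjoint U & V].
Proof. by case=> A0 _ H; have := subsetP A0 _ H; rewrite inE. Qed.

Lemma disjUl (W : finType) (A B C : {set W}) :
  [disjoint A :|: B & C] = [disjoint A & C] && [disjoint B & C].
Proof. by rewrite -!setI_eq0 setIUl setU_eq0. Qed.

Lemma ba_trans (W : finType) (G : brel W) (A B C : {set W}) :
  belief_algebra G -> [disjoint A & B] -> [disjoint A & C] -> [disjoint B & C] ->
  (A, B) \in G -> (B, C) \in G -> (A, B :|: C) \in G.
Proof.
move=> HG dAB dAC dBC HAB HBC.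
case: HG => A0 [A1 [A2 [A3 A4]]].
have H1 : (A :|: C, B) \in G.
  apply: (A3 A B) => //; first exact: subsetUl.
  by rewrite disjUl dAB disjoint_sym dBC.
have H2 : (A :|: B, C) \in G.
  apply: (A3 B C) => //; first exact: subsetUr.
  by rewrite disjUl dAC dBC.
have := A4 (A :|: B :|: C) _ _ _ _ _ _ H1 H2.
have -> : (A :|: C) :&: (A :|: B) = A.
  rewrite -setUIr; apply/setUidPl.
  by move: dBC; rewrite -setI_eq0 setIC => /eqP ->; rewrite sub0set.
apply; first by rewrite setUAC.
by [].
Qed.

Definition bbon (W : finType) (G : brel W) (D : {set W}) (s : seq {set W}) : Prop :=
  (forall i, i < size s -> nth set0 s i != set0) /\
  (forall i j, i < size s -> j < size s -> i != j ->
     [disjoint nth set0 s i & nth set0 s j]) /\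
  \bigcup_(B <- s) B = D /\
  (forall i, i.+1 < size s -> (nth set0 s i, nth set0 s i.+1) \in G) /\
  (forall i, i < size s -> forall X Y : {set W},
     X \subset nth set0 s i -> Y \subset nth set0 s i ->
     X != set0 -> Y != set0 -> [disjoint X & Y] -> (X, Y) \notin G).

Lemma bbon_sub (W : finType) (G : brel W) D s i :
  bbon G D s -> i < size s -> nth set0 s i \subset D.
Proof.
case=> _ [_ [<- _]] Hi; apply/subsetP=> x Hx; rewrite mem_bigcup_seq.
by apply/hasP; exists (nth set0 s i) => //; apply: mem_nth.
Qed.

Lemma bbon_cons (W : finType) (G : brel W) (D B : {set W}) s :
  belief_algebra G ->
  B \subset D -> B != set0 -> (B, D :\: B) \in G ->
  (forall X Y : {set W}, X \subset B -> Y \subset B ->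
     X != set0 -> Y != set0 -> [disjoint X & Y] -> (X, Y) \notin G) ->
  bbon G (D :\: B) s -> bbon G D (B :: s).
Proof.
move=> HG HBD HB0 HBG Hw Hs.
have Hsub := bbon_sub Hs.
have Hdis : forall j, j < size s -> [disjoint B & nth set0 s j].
  move=> j Hj; rewrite -setI_eq0; apply/eqP/setP=> x; rewrite !inE.
  apply/negP=> /andP[Hx Hy]; have := subsetP (Hsub _ Hj) _ Hy.
  by rewrite inE Hx.
case: (Hs) => H1 [H2 [H3 [H4 H5]]].
split; [|split; [|split; [|split]]].
- by case=> [|i] //= Hi; apply: H1.
- case=> [|i] [|j] //= Hi Hj Hij.
  + exact: Hdis.
  + by rewrite disjoint_sym; apply: Hdis.
  + by apply: H2.
- by rewrite big_cons H3 -{2}(setID D B) (setIidPr HBD).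
- case=> [|i] /= Hi; last exact: H4.
  have Hs0 : 0 < size s by [].
  case: HG => A0 [A1 [A2 [A3 A4]]].
  apply: (A3 B (D :\: B)) => //; first exact: Hsub.
  exact: Hdis.
- case=> [|i] /= Hi; last exact: H5.
  exact: Hw.
Qed.

Lemma disjDl (W : finType) (A B : {set W}) : [disjoint A :\: B & B].
Proof. by rewrite -setI_eq0; apply/eqP/setP=> x; rewrite !inE; case: (x \in B); rewrite ?andbF. Qed.

Definition cutp (W : finType) (G : brel W) (D T : {set W}) : bool :=
  [&& T \subset D, T != set0 & (T, D :\: T) \in G].

Definition mcut (W : finType) (G : brel W) (D : {set W}) : {set W} :=
  [arg min_(T < D | cutp G D T) #|T|].

Fixpoint bbf (W : finType) (G : brel W) (n : nat) (D : {set W}) : seq {set W} :=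
  if n is n'.+1 then
    if D == set0 then [::] else mcut G D :: bbf G n' (D :\: mcut G D)
  else [::].

Lemma mcut_spec (W : finType) (G : brel W) (D : {set W}) :
  belief_algebra G -> D != set0 ->
  cutp G D (mcut G D) /\ forall T, cutp G D T -> #|mcut G D| <= #|T|.
Proof.
move=> HG HD.
have HDD : cutp G D D.
  rewrite /cutp subxx HD setDv /=; case: HG => _ [A1 _]; exact/A1.
rewrite /mcut; case: arg_minnP => // T HT Hmin; split => //.
Qed.

Lemma mcut_within (W : finType) (G : brel W) (D : {set W}) :
  belief_algebra G -> D != set0 ->
  forall X Y : {set W}, X \subset mcut G D -> Y \subset mcut G D ->
     X != set0 -> Y != set0 -> [disjoint X & Y] -> (X, Y) \notin G.
Proof.
move=> HG HD X Y HX HY HX0 HY0 HXY; apply/negP=> HXYG.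
case: (mcut_spec HG HD) => /and3P[HMD HM0 HMG] Hmin.
set M := mcut G D in HX HY HMD HM0 HMG Hmin.
case: (HG) => A0 [A1 [A2 [A3 A4]]].
have H1 : (D :\: Y, Y) \in G.
  apply: (A3 X Y) => //; last exact: disjDl.
  apply/subsetP=> x Hx; rewrite inE (subsetP HMD _ (subsetP HX _ Hx)) andbT.
  by rewrite (disjointFr HXY Hx).
have HYD : Y \subset D := subset_trans HY HMD.
have := A4 D _ _ _ _ _ _ H1 HMG.
have -> : (D :\: Y) :&: M = M :\: Y.
  apply/setP=> x; rewrite !inE; case Hm: (x \in M); rewrite /= ?andbF ?andbT //.
  by rewrite (subsetP HMD _ Hm) andbT.
have -> : Y :|: D :\: M = D :\: (M :\: Y).
  apply/setP=> x; rewrite !inE.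
  case Hy: (x \in Y) => /=; first by rewrite (subsetP HYD _ Hy).
  by [].
move=> /(_ _ _) H.
have Hne : M :\: Y != set0.
  case/set0Pn: HX0 => x Hx; apply/set0Pn; exists x.
  by rewrite inE (disjointFr HXY Hx) (subsetP HX _ Hx).
have HG' : (M :\: Y, D :\: (M :\: Y)) \in G.
  apply: H.
  - by rewrite -{1}(setID D Y) (setIidPr HYD) setUC.
  - by rewrite -{1}(setID D M) (setIidPr HMD) setUC.
have Hc : cutp G D (M :\: Y).
  by rewrite /cutp (subset_trans (subsetDl M Y) HMD) Hne HG'.
have := Hmin _ Hc.
rewrite cardsDS // leqNgt; move/negP; apply.
case/set0Pn: HY0 => y Hy.
have : 0 < #|Y| by apply/card_gt0P; exists y.
have : #|Y| <= #|M| by apply: subset_leq_card.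
have : 0 < #|M| by apply/card_gt0P; exists y; apply: (subsetP HY).
move=> a b c; rewrite ltn_subrL; apply/andP; split => //.
Qed.

Lemma bbon_nil (W : finType) (G : brel W) : bbon G set0 [::].
Proof. by split; [|split; [|split; [|split]]] => //; rewrite big_nil. Qed.

Lemma bbf_bbon (W : finType) (G : brel W) n (D : {set W}) :
  belief_algebra G -> #|D| <= n -> bbon G D (bbf G n D).
Proof.
move=> HG; elim: n D => [|n IH] D HD /=.
  by move: HD; rewrite leqn0 cards_eq0 => /eqP ->; apply: bbon_nil.
case: eqP => [->|/eqP HD0]; first exact: bbon_nil.
case: (mcut_spec HG HD0) => /and3P[HMD HM0 HMG] _.
apply: bbon_cons => //; first exact: mcut_within.
apply: IH; rewrite cardsDS //.
case/set0Pn: HM0 => y Hy.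
have : 0 < #|mcut G D| by apply/card_gt0P; exists y.
move: HD; move: (#|D|) (#|mcut G D|) => a b; clear; lia.
Qed.

Lemma backbone_exists (W : finType) (G : brel W) :
  belief_algebra G -> is_backbone G (backbone G).
Proof.
move=> HG; rewrite /backbone; apply: epsilon_spec.
exists (bbf G #|W| [set: W]).
by case: (@bbf_bbon W G #|W| [set: W] HG (max_card _)) => a [b [c d]]; split; [|split; [|split]].
Qed.

Definition blk (W : finType) (s : seq {set W}) i := [set w | rank s w == i].
Definition up (W : finType) (s : seq {set W}) i := [set w | i <= rank s w].

Lemma ba_rank (W : finType) (G : brel W) (s : seq {set W}) (U V : {set W}) :
  belief_algebra G -> is_backbone G s -> (U, V) \in G ->
  exists2 u, u \in U & forall v, v \in V -> rank s u < rank s v.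
Proof.
move=> HG [Hne [Hd [Hc [Hcons Hwith]]]] HUV.
have Hnth : forall i, i < size s -> nth set0 s i = blk s i.
  by move=> i Hi; rewrite (nth_rank_set Hd Hc Hi).
have Hlt : forall w, rank s w < size s by move=> w; apply: rank_lt.
case: (HG) => A0 [A1 [A2 [A3 A4]]].
have Hstep : forall i, i < size s -> (blk s i, up s i.+1) \in G.
  suff : forall k i, size s = i + k.+1 -> (blk s i, up s i.+1) \in G.
    move=> H i Hi; apply: (H (size s - i.+1)); lia.
  elim=> [|k IH] i Hsz.
    have -> : up s i.+1 = set0.
      apply/setP=> w; rewrite !inE; have := Hlt w; lia.
    apply/A1; rewrite -Hnth; [apply: Hne|]; lia.
  have H1 := IH i.+1 ltac:(lia).
  have H2 : (blk s i, blk s i.+1) \in G by rewrite -!Hnth; [apply: Hcons| |]; lia.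
  have -> : up s i.+1 = blk s i.+1 :|: up s i.+2.
    apply/setP=> w; rewrite !inE; lia.
  apply: ba_trans => //; rewrite -setI_eq0; apply/eqP/setP=> w; rewrite !inE; lia.
case: (eqVneq V set0) => [->|HV0].
  case/set0Pn: (ba_nonempty HG HUV) => u Hu; exists u => // v; by rewrite inE.
case/set0Pn: HV0 => v0 Hv0.
case: (@arg_minnP _ v0 (fun v => v \in V) (rank s) Hv0) => v1 Hv1 Hmin.
set i := rank s v1.
case: (boolP [exists u in U, rank s u < i]) => [/exists_inP[u Hu Hui]|Hno].
  by exists u => // v Hv; apply: (leq_trans Hui); apply: Hmin.
have HU : forall u, u \in U -> i <= rank s u.
  move=> u Hu; rewrite leqNgt; apply/negP=> Hui; move/negP: Hno; apply.
  by apply/exists_inP; exists u.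
exfalso.
have Hdisj := ba_disj HG HUV.
set V' := V :&: up s i.
have H1 : (up s i :\: V', V') \in G.
  apply: (A3 U V) => //.
  - apply/subsetP=> u Hu; rewrite !inE (disjointFr Hdisj Hu) /= HU //.
  - exact: subsetIl.
  - exact: disjDl.
have Hi : i < size s by apply: Hlt.
have H2 := Hstep i Hi.
have := A4 (up s i) _ _ _ _ _ _ H1 H2.
have E1 : up s i = up s i :\: V' :|: V'.
  apply/setP=> w; rewrite !inE; case: (w \in V); lia.
have E2 : up s i = blk s i :|: up s i.+1.
  apply/setP=> w; rewrite !inE; lia.
move=> /(_ E1 E2) H3.
set X := (up s i :\: V') :&: blk s i.
set Y := V :&: blk s i.
have HXY : (X, Y) \in G.
  apply: A3 H3 _ _ => //.
  - apply/subsetP=> w; rewrite !inE; case: (w \in V); lia.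
  - rewrite -setI_eq0; apply/eqP/setP=> w; rewrite !inE; case: (w \in V); lia.
case: (eqVneq X set0) => [HX0|HX0].
  by move: (ba_nonempty HG HXY); rewrite HX0 eqxx.
have HY0 : Y != set0 by apply/set0Pn; exists v1; rewrite !inE Hv1 /=.
suff : (X, Y) \notin G by rewrite HXY.
apply: (Hwith i Hi X Y _ _ HX0 HY0).
- by rewrite Hnth // /X subsetIr.
- by rewrite Hnth // /Y subsetIr.
- rewrite -setI_eq0; apply/eqP/setP=> w; rewrite !inE; case: (w \in V); lia.
Qed.

Lemma cba_rank (W : finType) (le : rel W) (s : seq {set W}) :
  total_preorder le -> is_backbone (cba_of le) s ->
  forall w w', le w w' = (rank s w <= rank s w').
Proof.
move=> [Htot Htr] [Hne [Hd [Hc [Hcons Hwith]]]].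
have Hrefl : forall w, le w w by move=> w; case/orP: (Htot w w).
have Hnth : forall i, i < size s -> nth set0 s i = blk s i.
  by move=> i Hi; rewrite (nth_rank_set Hd Hc Hi).
have Hlt : forall w, rank s w < size s by move=> w; apply: rank_lt.
have Hsurj : forall i, i < size s -> exists w, rank s w = i.
  move=> i Hi; case/set0Pn: (Hne i Hi) => w; rewrite Hnth // inE => /eqP <-.
  by exists w.
have Ha : forall w w', rank s w = rank s w' -> le w w'.
  move=> w w' E; apply/negPn/negP => Hn.
  have Hww : w != w' by apply/negP=> /eqP E'; rewrite E' Hrefl in Hn.
  have Hin : ([set w'], [set w]) \in cba_of le.
    rewrite cba_mem; apply/andP; split.
      by rewrite disjoints1 inE eq_sym.
    apply/exists_inP; exists w'; first by rewrite inE.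
    apply/forall_inP=> x; rewrite inE => /eqP ->; rewrite Hn andbT.
    by case/orP: (Htot w w') => // H; rewrite H in Hn.
  have Hi := Hlt w.
  suff : ([set w'], [set w]) \notin cba_of le by rewrite Hin.
  apply: (Hwith (rank s w) Hi).
  - by rewrite Hnth // sub1set inE E.
  - by rewrite Hnth // sub1set inE.
  - by apply/set0Pn; exists w'; rewrite inE.
  - by apply/set0Pn; exists w; rewrite inE.
  - by rewrite disjoints1 inE eq_sym.
pose st x y := le x y && ~~ le y x.
have Htrst : forall x y z, st x y -> st y z -> st x z.
  move=> x y z /andP[h1 h2] /andP[h3 h4]; rewrite /st (Htr _ _ _ h1 h3) /=.
  by apply/negP=> h5; move/negP: h4; apply; apply: Htr h5 h1.
have Hb : forall w w', rank s w' = (rank s w).+1 -> st w w'.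
  move=> w w' E.
  have Hi : (rank s w).+1 < size s by rewrite -E.
  have := Hcons _ Hi; rewrite cba_mem => /andP[_ /exists_inP[x Hx /forall_inP Hx']].
  rewrite Hnth ?inE in Hx; last by apply: ltnW.
  have := Hx' w'; rewrite Hnth // inE E eqxx => /(_ isT) Hxw.
  have Hwx : le w x by apply: Ha; rewrite (eqP Hx).
  have Hxw' : le x w by apply: Ha; rewrite (eqP Hx).
  case/andP: Hxw => h1 h2; rewrite /st (Htr _ _ _ Hwx h1) /=.
  by apply/negP=> h3; move/negP: h2; apply; apply: Htr h3 Hwx.
have Hk : forall k w w', rank s w' = rank s w + k.+1 -> st w w'.
  elim=> [|k IH] w w' E; first by apply: Hb; rewrite E addn1.
  have Hv : rank s w + k.+1 < size s by have := Hlt w'; lia.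
  case: (Hsurj _ Hv) => v Ev.
  apply: (@Htrst w v w'); first by apply: IH.
  by apply: Hb; rewrite Ev E; lia.
move=> w w'; case: (ltngtP (rank s w) (rank s w')) => H.
- have := Hk (rank s w' - (rank s w).+1) w w' ltac:(lia).
  by case/andP.
- have := Hk (rank s w - (rank s w').+1) w' w ltac:(lia).
  by case/andP=> _ /negbTE.
- by apply: Ha.
Qed.

Lemma fun_rank_eq (W : finType) (f g : W -> nat) n m :
  (forall w, f w < n) -> (forall w, g w < m) ->
  (forall i, i < n -> exists w, f w = i) -> (forall i, i < m -> exists w, g w = i) ->
  (forall w w', (f w <= f w') = (g w <= g w')) -> forall w, f w = g w.
Proof.
move=> Hf Hg Sf Sg Hfg.
suff H : forall N k, k < N -> forall w, f w = k -> g w = k.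
  by move=> w; symmetry; apply: (H (f w).+1 (f w)).
elim=> [|N IH] k // Hk w Hw.
case: (ltnP k N) => HkN; first exact: IH.
have Ek : k = N by lia.
move: Hk Hw HkN; rewrite Ek => Hk Hw HkN.
apply/eqP; rewrite eqn_leq; apply/andP; split.
- rewrite leqNgt; apply/negP=> Hlt.
  have HN : N < m by have := Hg w; lia.
  case: (Sg _ HN) => u Hu.
  have : g u < g w by rewrite Hu.
  rewrite ltnNge -Hfg -ltnNge => Hfu.
  have := IH (f u) ltac:(lia) u erefl; lia.
- clear HkN Hk Ek; move: IH Hw; case: N => [|N] IH Hw //.
  have HN : N < n by have := Hf w; lia.
  case: (Sf _ HN) => v Hv.
  have := IH N (ltnSn _) v Hv => Hgv.
  have : f v < f w by rewrite Hv Hw.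
  by rewrite ltnNge Hfg -ltnNge Hgv.
Qed.

Lemma cba_bb_unique (W : finType) (le : rel W) (s t : seq {set W}) :
  total_preorder le -> is_backbone (cba_of le) s -> is_backbone (cba_of le) t -> s = t.
Proof.
move=> Hle Hs Ht.
have Rs := cba_rank Hle Hs; have Rt := cba_rank Hle Ht.
case: Hs => Hne [Hd [Hc _]]; case: Ht => Hne' [Hd' [Hc' _]].
have Surj : forall (u : seq {set W}),
   (forall i, i < size u -> nth set0 u i != set0) ->
   (forall i j, i < size u -> j < size u -> i != j ->
     [disjoint nth set0 u i & nth set0 u j]) ->
   \bigcup_(B <- u) B = [set: W] ->
   forall i, i < size u -> exists w, rank u w = i.
  move=> u H1 H2 H3 i Hi; case/set0Pn: (H1 i Hi) => w.
  by rewrite (nth_rankE _ H2 H3 Hi) => /eqP <-; exists w.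
have E : forall w, rank s w = rank t w.
  apply: (@fun_rank_eq W (rank s) (rank t) (size s) (size t)).
  - by move=> w; apply: rank_lt.
  - by move=> w; apply: rank_lt.
  - exact: Surj.
  - exact: Surj.
  - by move=> w w'; rewrite -Rs -Rt.
have Hsz : size s = size t.
  apply/eqP; rewrite eqn_leq; apply/andP; split; rewrite leqNgt; apply/negP=> H.
  - case: (Surj _ Hne Hd Hc _ H) => u Hu.
    by have := rank_lt u Hc'; rewrite -E Hu ltnn.
  - case: (Surj _ Hne' Hd' Hc' _ H) => u Hu.
    by have := rank_lt u Hc; rewrite E Hu ltnn.
apply: (eq_from_nth (x0 := set0) Hsz) => i Hi.
rewrite (nth_rank_set Hd Hc Hi) (nth_rank_set Hd' Hc') -?Hsz //.
by apply/setP=> w; rewrite !inE E.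
Qed.

Lemma Com_tp (W : finType) (G : brel W) :
  total_preorder (fun w w' => rank (backbone G) w <= rank (backbone G) w').
Proof. by split; [move=> x y; apply: leq_total | move=> x y z; apply: leq_trans]. Qed.

Lemma Com_CBA (W : finType) (G : brel W) : CBA (Com G).
Proof. by exists (fun w w' => rank (backbone G) w <= rank (backbone G) w'); split; [apply: Com_tp|]. Qed.

Lemma Com_ba (W : finType) (G : brel W) : belief_algebra (Com G).
Proof. exact: (cba_belief (Com_tp G)). Qed.

Lemma sub_Com (W : finType) (G : brel W) : belief_algebra G -> G \subset Com G.
Proof.
move=> HG; apply/subsetP=> [[U V]] H; rewrite /Com cba_mem (ba_disj HG H) /=.
have Hs := backbone_exists HG.
case: (ba_rank HG Hs H) => u Hu Hv; apply/exists_inP; exists u => //.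
by apply/forall_inP=> v /Hv Hl; rewrite (ltnW Hl) /= -ltnNge.
Qed.

Lemma bb_Com (W : finType) (G : brel W) : belief_algebra G -> backbone (Com G) = backbone G.
Proof.
move=> HG; have Hs := backbone_exists HG.
set s := backbone G in Hs *.
have Hs' : is_backbone (Com G) s.
  case: (Hs) => Hne [Hd [Hc [Hcons Hwith]]].
  have Hnth : forall i, i < size s -> nth set0 s i = blk s i.
    by move=> i Hi; rewrite (nth_rank_set Hd Hc Hi).
  split; [done|split; [done|split; [done|split]]].
  - move=> i Hi; rewrite /Com cba_mem Hd //; last by rewrite neq_ltn ltnSn.
      2: by apply: ltnW.
    case/set0Pn: (Hne i (ltnW Hi)) => x Hx; apply/exists_inP; exists x => //.
    apply/forall_inP=> y; rewrite !Hnth ?inE // in Hx *; last by apply: ltnW.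
    by move=> /eqP ->; rewrite (eqP Hx) leqnSn /= ltnn.
  - move=> i Hi X Y HX HY _ HY0 _; apply/negP; rewrite /Com cba_mem.
    case/andP=> _ /exists_inP[x Hx /forall_inP H].
    case/set0Pn: HY0 => y Hy; have := H y Hy.
    rewrite Hnth // in HX HY.
    move: (subsetP HX _ Hx) (subsetP HY _ Hy); rewrite !inE => /eqP -> /eqP ->.
    by rewrite leqnn.
symmetry; apply: (cba_bb_unique (Com_tp G) Hs').
exact: (backbone_exists (Com_ba G)).
Qed.

Lemma bsupport0 (W : finType) (s : seq {set W}) : bsupport s set0 = set0.
Proof.
rewrite /bsupport nth_default // leqNgt -has_find; apply/hasP => [[B _]].
by rewrite -setI_eq0 setI0 eqxx.
Qed.

Lemma bsupportP (W : finType) (s : seq {set W}) (X : {set W}) :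
  (forall i j, i < size s -> j < size s -> i != j ->
     [disjoint nth set0 s i & nth set0 s j]) ->
  \bigcup_(B <- s) B = [set: W] -> X != set0 ->
  exists k, [/\ bsupport s X = blk s k, k < size s,
     exists2 x, x \in X & rank s x = k & forall x, x \in X -> k <= rank s x].
Proof.
move=> Hd Hc HX.
set a := (fun B : {set W} => ~~ [disjoint B & X]).
have Ha : has a s.
  case/set0Pn: HX => x Hx; apply/hasP; exists (nth set0 s (rank s x)).
    by apply: mem_nth; apply: rank_lt.
  rewrite /a -setI_eq0; apply/set0Pn; exists x; rewrite inE Hx andbT.
  exact: mem_rank.
have Hk : find a s < size s by rewrite -has_find.
exists (find a s); split => //.
- by rewrite /bsupport -/a (nth_rank_set Hd Hc Hk).
- have := nth_find set0 Ha; rewrite /a -setI_eq0 => /set0Pn[x].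
  rewrite inE => /andP[Hx1 Hx2]; exists x => //.
  by apply/eqP; rewrite -(nth_rankE _ Hd Hc Hk).
- move=> x Hx; rewrite leqNgt; apply/negP=> Hlt.
  have := before_find set0 Hlt; rewrite /a => /negbFE; rewrite -setI_eq0 => /eqP/setP/(_ x).
  by rewrite !inE Hx mem_rank.
Qed.

Theorem proposition3 (W : finType) (HW : 0 < #|W|)
  (op : brel W -> brel W -> brel W) (Hop : revision_operator op)
  (G1 G2 : brel W) (H1 : belief_algebra G1) (H2 : belief_algebra G2) :
  let Gs := op (Com G1) (Com G2) in
  op G1 G2 = Gen ((G1 :&: Gs) :|: G2) /\
  G1 :&: Gs =
    [set p | (p \in G1) &&
             ((bsupport (backbone Gs) p.1, bsupport (backbone Gs) p.2) \in Gs)].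
Proof.
move=> Gs.
case: Hop => R0 [R1 [R2 [R3 [R4 [R5 R6]]]]].
have HC1 := Com_ba G1; have HC2 := Com_ba G2.
have HGs : belief_algebra Gs := R0 _ _ HC1 HC2.
have Hsub : op G1 G2 \subset Gs.
  apply: R5 => //; split; rewrite ?bb_Com ?sub_Com //.
split.
  set Om' := (G1 :&: Gs) :|: G2.
  case: (R2 _ _ H1 H2) => Om [HOm Hopm].
  have HOmO : Om \subset Om'.
    apply/subsetP=> p Hp.
    have HpGs : p \in Gs.
      by apply: (subsetP Hsub); rewrite Hopm; apply: (subsetP (Gen_ext Om)).
    move: (subsetP HOm _ Hp); rewrite !inE HpGs andbT; done.
  have Hle : op G1 G2 \subset Gen Om' by rewrite Hopm; apply: Gen_mono.
  have HG2s : G2 \subset Gs := subset_trans (R1 _ _ H1 H2) Hsub.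
  have HOs : Om' \subset Gs by rewrite subUset subsetIr HG2s.
  have Hgen : Gen Om' \subset Gs by apply: Gen_sub; apply: ba_closed.
  apply: R6 => //.
  by apply: setSU; apply: subsetIl.
case: (R3 _ _ HC1 HC2 (Com_CBA G1) (Com_CBA G2)) => le [Htp EGs].
have Hs : is_backbone Gs (backbone Gs) := backbone_exists HGs.
set s := backbone Gs in Hs *.
have Hs' : is_backbone (cba_of le) s by rewrite -EGs.
have Rk := cba_rank Htp Hs'.
have Hmem : forall X Y : {set W}, ((X, Y) \in Gs) =
    [disjoint X & Y] && [exists x in X, forall y in Y, rank s x < rank s y].
  move=> X Y; rewrite /Gs EGs cba_mem; congr (_ && _).
  apply: eq_existsb => x; congr (_ && _); apply: eq_forallb => y.
  congr (_ ==> _); rewrite !Rk; lia.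
case: Hs => _ [Hd [Hc _]].
apply/setP=> [[U V]]; rewrite !inE /=.
case HUV: ((U, V) \in G1) => //=.
have HU0 := ba_nonempty H1 HUV.
have HdUV := ba_disj H1 HUV.
case: (bsupportP Hd Hc HU0) => kU [EU HkU [u0 Hu0 Eu0] HminU].
rewrite !Hmem EU HdUV /=.
case: (eqVneq V set0) => [EV|HV0].
  rewrite EV bsupport0.
  have -> : [disjoint blk s kU & set0] by rewrite -setI_eq0 setI0.
  apply/idP/idP => _; apply/exists_inP.
    by exists u0; [rewrite inE Eu0|apply/forall_inP=> y; rewrite inE].
  by exists u0 => //; apply/forall_inP=> y; rewrite inE.
case: (bsupportP Hd Hc HV0) => kV [EV HkV [v0 Hv0 Ev0] HminV].
rewrite EV; apply/idP/idP.
- case/exists_inP=> u Hu /forall_inP Hv.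
  have Hlt : kU < kV by have := Hv _ Hv0; have := HminU _ Hu; lia.
  apply/andP; split.
    rewrite -setI_eq0; apply/eqP/setP=> w; rewrite !inE; lia.
  apply/exists_inP; exists u0; first by rewrite inE Eu0.
  apply/forall_inP=> y; rewrite inE => /eqP ->; lia.
- case/andP=> _ /exists_inP[x Hx /forall_inP Hy].
  have := Hy v0; rewrite inE Ev0 eqxx => /(_ isT).
  rewrite inE in Hx; rewrite (eqP Hx) => Hlt.
  apply/exists_inP; exists u0 => //; apply/forall_inP=> v Hv.
  have := HminV _ Hv; lia.
Qed.
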